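(* If $\mathbf{X}$ satisfies (A1), then for every $j\ge1$, $$W_j\le\lambda^{\max}\Big(M^{abs}_{T_j,\,T_{j+1}-1}+|U_{T_j}|\Big)\,I\{T_j<\infty\}\quad\text{a.e.},$$ where $T_{j+1}-1$ is interpreted as $\infty$ when $T_{j+1}=\infty$.
   Context: $\mathbf{X}=\{X_n\}_{n\ge0}$ is a real-valued integrable process adapted to a filtration $\{\mathcal{F}_n\}_{n\ge0}$; $\epsilon_n=X_n-E[X_n\mid\mathcal{F}_{n-1}]$, $n\ge1$; $U_n=E[X_n\mid\mathcal{F}_{n-1}]\,I\{X_{n-1}=0\}$. Events: $D^+_n=\{X_n>0\}$, $D^-_n=\{X_n<0\}$, $D^0_n=\{X_n=0\}$, and for $n\ge1$, $D_n=D^+_n(D^+_{n-1})^c\cup D^-_n(D^-_{n-1})^c\cup D^0_n(D^0_{n-1})^c$. For $j\ge1$, $T_j=\inf\{t\ge1:\sum_{i=1}^tI\{D_i\}\ge j\}$ ($\inf\emptyset=\infty$). $W_j=\sup_{T_j\le i<T_{j+1}}|X_i|$ if $T_j<\infty$ and $W_j=0$ if $T_j=\infty$. $M^{abs}_{s,t}=\sum_{i=s}^t|\epsilon_i|$ (allowing $t=\infty$, with value possibly $+\infty$). (A1) There are constants $\alpha_n\ge0$ with $\sum_n\alpha_n<\infty$ such that a.e., for all $n\ge1$: $0\le \frac{E[X_n\mid\mathcal{F}_{n-1}]}{X_{n-1}}I\{X_{n-1}\ne0\}\le 1+\alpha_n$. $\lambda^k_t=\prod_{i=t-k+1}^t(1+\alpha_i)$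 for $t,k\ge1$, $\lambda^0_t=1$, and $\lambda^{\max}=\sup_{t,k}\lambda^k_t$ (finite under (A1)). *)

(* Defs.v *)
From HB Require Import structures.
From mathcomp Require Import all_boot all_order all_algebra.
From mathcomp Require Import all_classical all_reals all_analysis.
Set Implicit Arguments. Unset Strict Implicit. Unset Printing Implicit Defensive.
Import Order.TTheory GRing.Theory Num.Theory.
Local Open Scope classical_set_scope.
Local Open Scope ring_scope.

Section Defs.
Context {d : measure_display} {T : measurableType d} {R : realType}.

Definition Gmeasurable (G : set (set T)) (f : T -> R) :=
  forall B : set R, measurable B -> G (f @^-1` B).

Definition sub_sigma_algebra (G : set (set T)) :=
  sigma_algebra setT G /\ (forall A, G A -> measurable A).

Definition filtration (F : nat -> set (set T)) :=
  (forall n, sub_sigma_algebra (F n)) /\ (forall n m, (n <= m)%N -> F n `<=` F m).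

Definition is_cond_exp (P : probability T R) (G : set (set T)) (X Y : T -> R) :=
  [/\ Gmeasurable G Y, P.-integrable setT (EFin \o Y) &
      forall A, G A -> (\int[P]_(x in A) (Y x)%:E = \int[P]_(x in A) (X x)%:E)%E].

(* epsilon_n = X_n - E[X_n | F_{n-1}], with Y n a version of E[X_n | F_{n-1}] *)
Definition eps (X Y : nat -> T -> R) (n : nat) (w : T) : R := X n w - Y n w.

Definition Uproc (X Y : nat -> T -> R) (n : nat) (w : T) : R :=
  Y n w * (X n.-1 w == 0)%:R.

(* indicator of D_n (n >= 1): change of sign class between n-1 and n *)
Definition Dn (X : nat -> T -> R) (n : nat) (w : T) : bool :=
  [|| (0 < X n w) && ~~ (0 < X n.-1 w),
      (X n w < 0) && ~~ (X n.-1 w < 0)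
    | (X n w == 0) && (X n.-1 w != 0)].

Definition Tj (X : nat -> T -> R) (j : nat) (w : T) : \bar R :=
  ereal_inf [set (t%:R)%:E | t in
     [set t : nat | (1 <= t)%N /\ (j <= \sum_(1 <= i < t.+1) Dn X i w)%N]].

Definition Wj (X : nat -> T -> R) (j : nat) (w : T) : \bar R :=
  if (Tj X j w < +oo)%E then
    ereal_sup [set (`|X i w|)%:E | i in
      [set i : nat | (Tj X j w <= (i%:R)%:E)%E /\ ((i%:R)%:E < Tj X j.+1 w)%E]]
  else 0%E.

Definition Mabs (X Y : nat -> T -> R) (s : nat) (t : \bar R) (w : T) : \bar R :=
  (\esum_(i in [set i : nat | (s <= i)%N /\ ((i%:R)%:E <= t)%E]) (`|eps X Y i w|)%:E)%E.

End Defs.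

Definition lambda {R : realType} (alpha : nat -> R) (k t : nat) : R :=
  \prod_(t.+1 - k <= i < t.+1) (1 + alpha i).

(* lambda^max = sup_{t, k} lambda^k_t  (over 1 <= k <= t, so that all indices are >= 1) *)
Definition lambda_max {R : realType} (alpha : nat -> R) : \bar R :=
  ereal_sup [set x : \bar R | exists k t : nat,
     [/\ (1 <= k)%N, (k <= t)%N & x = (lambda alpha k t)%:E]].

(* Main.v *)
Require Import Defs.
From HB Require Import structures.
From mathcomp Require Import all_boot all_order all_algebra.
From mathcomp Require Import all_classical all_reals all_analysis.
From mathcomp Require Import zify lra.
Import Order.TTheory GRing.Theory Num.Theory numFieldNormedType.Exports.
Local Open Scope classical_set_scope.
Local Open Scope ring_scope.

Lemma inf_nat (R : realType) (A : set nat) :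
  (ereal_inf [set ((t%:R : R))%:E | t in A] = +oo%E /\ forall k, ~ A k) \/
  exists m, [/\ ereal_inf [set ((t%:R : R))%:E | t in A] = (m%:R)%:E, A m &
             forall k, A k -> (m <= k)%N].
Proof.
have [[k Ak]|nA] := pselect (exists k, A k); last first.
  left; split; last by move=> k Ak; apply: nA; exists k.
  suff -> : [set ((t%:R : R))%:E | t in A] = set0 by rewrite ereal_inf0.
  by apply/seteqP; split => x // [t At _]; apply: nA; exists t.
right.
have ex : exists n, `[< A n >] by exists k; apply/asboolP.
case: (ex_minnP ex) => m /asboolP Am Hmin.
exists m; split => //; last by move=> k' Ak'; apply: Hmin; apply/asboolP.
apply/eqP; rewrite eq_le; apply/andP; split.
  by apply: ereal_inf_lbound; exists m.
apply/ereal_infP => y [t At <-].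
by rewrite lee_fin ler_nat; apply: Hmin; apply/asboolP.
Qed.

Lemma prod_ge1 (R : realType) (a : nat -> R) t n :
  (forall k, 0 <= a k) -> 1 <= \prod_(i < n) (1 + a (t + i)%N).
Proof.
move=> a0; elim: n => [|n IH]; first by rewrite big_ord0.
rewrite big_ord_recr /=.
have h : 1 <= 1 + a (t + n)%N by rewrite lerDl.
by have := ler_pM ler01 ler01 IH h; rewrite mulr1.
Qed.

Lemma run_bound (R : realType) (x y e a : nat -> R) (u : R) (t N : nat) :
 (forall k, 0 <= a k) -> 0 <= u -> y t <= u ->
 (forall k, x k = y k + e k) ->
 (forall n, (n < N)%N -> y (t + n.+1)%N <= (1 + a (t + n.+1)%N) * x (t + n)%N) ->
 forall n, (n <= N)%N -> x (t+n)%N <=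
   (\prod_(i < n.+1) (1 + a (t+i)%N)) * (u + \sum_(i < n.+1) `|e (t+i)%N|).
Proof.
move=> a0 u0 yt xE Hs; elim => [|n IH] HnN.
  rewrite !big_ord1 addn0 xE.
  have h1 : y t + e t <= u + `|e t| by apply: lerD => //; apply: ler_norm.
  apply: (le_trans h1); rewrite -[X in X <= _]mul1r; apply: ler_wpM2r.
    by apply: addr_ge0.
  by rewrite lerDl.
have HnN' : (n <= N)%N by apply: ltnW.
have IH' := IH HnN'.
set L := \prod_(i < n.+1) (1 + a (t + i)%N) in IH'.
set S := u + \sum_(i < n.+1) `|e (t + i)%N| in IH'.
have L1 : 1 <= L by apply: prod_ge1.
have S0 : 0 <= S by apply: addr_ge0 => //; apply: sumr_ge0 => i _.
rewrite big_ord_recr /= -/L [\sum_(i < n.+2) _]big_ord_recr /= addrA -/S.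
have a1 : 0 <= 1 + a (t + n.+1)%N by apply: addr_ge0.
rewrite xE.
have h1 := Hs n HnN.
have h2 : (1 + a (t + n.+1)%N) * x (t + n)%N <= (1 + a (t + n.+1)%N) * (L * S).
  by apply: ler_wpM2l.
have h3 : e (t + n.+1)%N <= (L * (1 + a (t + n.+1)%N)) * `|e (t + n.+1)%N|.
  apply: (le_trans (ler_norm _)); rewrite -[X in X <= _]mul1r; apply: ler_wpM2r => //.
  have h5 : 1 <= 1 + a (t + n.+1)%N by rewrite lerDl.
  by have := ler_pM ler01 ler01 L1 h5; rewrite mulr1.
rewrite mulrDr; apply: lerD; last exact: h3.
apply: (le_trans h1); apply: (le_trans h2).
by rewrite mulrA [X in X * _ <= _]mulrC.
Qed.

Lemma shift_sum (R : realType) (F : nat -> R) m N :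
  \sum_(m <= k < (m + N).+1) F k = \sum_(k < N.+1) F (m + k)%N.
Proof.
rewrite -{1}[m]add0n big_addn -addnS addKn big_mkord.
by apply: eq_bigr => i _; rewrite addnC.
Qed.
Lemma shift_prod (R : realType) (F : nat -> R) m N :
  \prod_(m <= k < (m + N).+1) F k = \prod_(k < N.+1) F (m + k)%N.
Proof.
rewrite -{1}[m]add0n big_addn -addnS addKn big_mkord.
by apply: eq_bigr => i _; rewrite addnC.
Qed.
Lemma Dn_cases (R : realType) (a b : R) :
  ~~ [|| (0 < a) && ~~ (0 < b), (a < 0) && ~~ (b < 0) | (a == 0) && (b != 0)] ->
  [/\ 0 < b -> 0 < a, b < 0 -> a < 0 & b = 0 -> a = 0].
Proof.
case: (ltgtP a 0) => ha; case: (ltgtP b 0) => hb //=; split => // h;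
  try (by move: h; rewrite ?hb ?ltxx);
  try (by move: (lt_trans h hb); rewrite ltxx);
  try (by move: (lt_trans hb h); rewrite ltxx);
  try (by move: hb; rewrite h ltxx).
Qed.

Definition cnt (D : nat -> bool) (t : nat) : nat := (\sum_(1 <= i < t.+1) D i)%N.

Lemma cntS D t : cnt D t.+1 = (cnt D t + D t.+1)%N.
Proof. by rewrite /cnt big_nat_recr. Qed.

Lemma cnt0 D : cnt D 0 = 0%N.
Proof. by rewrite /cnt big_geq. Qed.

Lemma cnt_mono D a b : (a <= b)%N -> (cnt D a <= cnt D b)%N.
Proof.
elim: b => [|b IH]; first by rewrite leqn0 => /eqP ->.
rewrite leq_eqVlt => /orP [/eqP -> //|]; rewrite ltnS => ab.
rewrite cntS; apply: (leq_trans (IH ab)); exact: leq_addr.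
Qed.

Lemma cntP D k : (1 <= k)%N -> cnt D k = (cnt D k.-1 + D k)%N.
Proof. by move=> k1; rewrite -{1}(prednK k1) cntS prednK. Qed.

Theorem lemmaA2 (d : measure_display) (T : measurableType d) (R : realType)
  (P : probability T R) (F : nat -> set (set T)) (X Y : nat -> T -> R)
  (alpha : nat -> R) :
  filtration F ->
  (forall n, Gmeasurable (F n) (X n)) ->
  (forall n, P.-integrable setT (EFin \o X n)) ->
  (forall n, (1 <= n)%N -> is_cond_exp P (F n.-1) (X n) (Y n)) ->
  (* (A1) *)
  (forall n, 0 <= alpha n) ->
  cvgn (series alpha) ->
  {ae P, forall w, forall n, (1 <= n)%N -> X n.-1 w != 0 ->
     0 <= Y n w / X n.-1 w <= 1 + alpha n} ->
  forall j, (1 <= j)%N ->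
  {ae P, forall w,
     (forall t : nat, Tj X j w = (t%:R)%:E ->
        (Wj X j w <= lambda_max alpha *
           (Mabs X Y t (Tj X j.+1 w - 1) w + (`|Uproc X Y t w|)%:E))%E)
     /\ (Tj X j w = +oo%E -> (Wj X j w <= 0)%E)}.
Proof.
move=> _ _ _ _ a0 _ HA j j1.
move: HA; apply: filterS => w Hw.
pose D := fun i => Dn X i w.
have TjE : forall j', Tj X j' w = ereal_inf [set ((t%:R : R))%:E | t in
    [set t | (1 <= t)%N /\ (j' <= cnt D t)%N]] by [].
split; last by move=> Hinf; rewrite /Wj Hinf ltxx.
move=> t Ht.
have [[Hi _]|[m [Hm [m1 Sm] Mm]]] :=
  inf_nat R [set t | (1 <= t)%N /\ (j <= cnt D t)%N].
  by move: Ht; rewrite TjE Hi.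
have tm : t = m.
  by move: Ht; rewrite TjE Hm => /eqP; rewrite eqe eqr_nat => /eqP.
subst t.
rewrite /Wj Ht ltry.
apply/ereal_supP => _ [i [Hi1 Hi2] <-].
have mi : (m <= i)%N by move: Hi1; rewrite lee_fin ler_nat.
have [Hc HT] : ~ (j.+1 <= cnt D i)%N /\
    forall k, (k <= i)%N -> ((k%:R)%:E <= Tj X j.+1 w - 1)%E.
  have [[Hi' HnA]|[n [Hn [n1 Sn] Mn]]] :=
    inf_nat R [set t | (1 <= t)%N /\ (j.+1 <= cnt D t)%N].
    split; first by move=> c; apply: (HnA i); split => //; exact: leq_trans m1 mi.
    by move=> k _; rewrite TjE Hi' addye ?leey.
  have iN : (i < n)%N by move: Hi2; rewrite TjE Hn lte_fin ltr_nat.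
  split.
    by move=> c; have := Mn i (conj (leq_trans m1 mi) c); rewrite leqNgt iN.
  move=> k ki; rewrite TjE Hn -EFinB lee_fin lerBrDr natr1 ler_nat.
  exact: leq_ltn_trans ki iN.
have Dm : D m.
  have lt : (cnt D m.-1 < j)%N.
    case E: m.-1 => [|m']; first by rewrite cnt0.
    rewrite ltnNge; apply/negP => c.
    have := Mm m'.+1 (conj erefl c); rewrite -E; lia.
  move: Sm; rewrite (@cntP D m m1); case: (D m) => //; rewrite addn0 => c.
  by rewrite ltnNge c in lt.
have noD : forall k, (m < k)%N -> (k <= i)%N -> ~~ D k.
  move=> k mk ki; apply/negP => Dk; apply: Hc.
  have k1 : (1 <= k)%N by lia.
  have e := @cntP D k k1; rewrite Dk in e.
  have h3 : (m <= k.-1)%N by lia.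
  have h1 := @cnt_mono D m k.-1 h3.
  have h2 := @cnt_mono D k i ki.
  simpl in e; lia.
set N := (i - m)%N.
have iE : i = (m + N)%N by rewrite /N subnKC.
set L := \prod_(k < N.+1) (1 + alpha (m + k)%N).
set S := \sum_(k < N.+1) `|eps X Y (m + k)%N w|.
have L1 : 1 <= L by apply: prod_ge1.
have S0 : 0 <= S by apply: sumr_ge0 => k _.
have Hb : `|X i w| <= L * (`|Uproc X Y m w| + S).
  have XE : forall k, X k w = Y k w + eps X Y k w.
    by move=> k; rewrite /eps addrC subrK.
  have Dc : forall n, (n < N)%N -> [/\ 0 < X (m + n)%N w -> 0 < X (m + n.+1)%N w,
      X (m + n)%N w < 0 -> X (m + n.+1)%N w < 0 &
      X (m + n)%N w = 0 -> X (m + n.+1)%N w = 0].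
    move=> n nN.
    have h := noD (m + n.+1)%N ltac:(lia) ltac:(lia).
    rewrite /D /Dn addnS /= in h; rewrite addnS; exact: Dn_cases h.
  have prop : forall p : R -> Prop,
      (forall n, (n < N)%N -> p (X (m + n)%N w) -> p (X (m + n.+1)%N w)) ->
      p (X m w) -> forall n, (n <= N)%N -> p (X (m + n)%N w).
    move=> p Hp p0; elim => [|n IH] nN; first by rewrite addn0.
    apply: Hp => //; apply: IH; exact: ltnW.
  have Hk : forall n, (n < N)%N -> X (m + n.+1)%N.-1 w = X (m + n)%N w.
    by move=> n _; rewrite addnS.
  rewrite iE.
  case: (ltgtP (X m w) 0) => hm.
  - have neg := prop (fun x => x < 0)
      (fun n nN => let: And3 _ h _ := Dc n nN in h) hm.
    have ym : 0 <= X m.-1 w.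
      move: Dm; rewrite /D /Dn (lt_gtF hm) (lt_eqF hm) hm /=.
      by rewrite orbF -leNgt.
    have yt : - Y m w <= `|Uproc X Y m w|.
      rewrite /Uproc; case: (eqVneq (X m.-1 w) 0) => h0.
        by rewrite /= mulr1 -normrN ler_norm.
      rewrite /= mulr0 normr0 oppr_le0.
      have /andP [h1 _] := Hw m m1 h0.
      have xp : 0 < X m.-1 w by rewrite lt_def h0 ym.
      have := mulr_ge0 h1 (ltW xp); by rewrite divfK.
    have := @run_bound R (fun k => - X k w) (fun k => - Y k w)
      (fun k => - eps X Y k w) alpha `|Uproc X Y m w| m N a0 (normr_ge0 _) yt.
    move=> /(_ (fun k => ltac:(by rewrite /= XE opprD))).
    have Hs : forall n, (n < N)%N -> - Y (m + n.+1)%N w <=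
        (1 + alpha (m + n.+1)%N) * - X (m + n)%N w.
      move=> n nN; have xn := neg n (ltnW nN).
      have hne : X (m + n.+1)%N.-1 w != 0 by rewrite Hk // lt_eqF.
      have /andP [_ h] := Hw (m + n.+1)%N ltac:(lia) hne.
      rewrite Hk // ler_ndivrMr // in h.
      by rewrite mulrN lerN2.
    move=> /(_ Hs N (leqnn N)) /=.
    move=> h; rewrite ltr0_norm ?neg //; apply: (le_trans h).
    rewrite le_eqVlt; apply/orP; left; apply/eqP; rewrite /L /S.
    congr (_ * (_ + _)); apply: eq_bigr => k _; exact: normrN.
  - have pos := prop (fun x => 0 < x)
      (fun n nN => let: And3 h _ _ := Dc n nN in h) hm.
    have ym : X m.-1 w <= 0.
      move: Dm; rewrite /D /Dn (lt_gtF hm) (gt_eqF hm) hm /=.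
      by rewrite orbF -leNgt.
    have yt : Y m w <= `|Uproc X Y m w|.
      rewrite /Uproc; case: (eqVneq (X m.-1 w) 0) => h0.
        by rewrite /= mulr1 ler_norm.
      rewrite /= mulr0 normr0.
      have /andP [h1 _] := Hw m m1 h0.
      have xp : X m.-1 w < 0 by rewrite lt_neqAle h0 ym.
      have := mulr_ge0_le0 h1 (ltW xp); by rewrite divfK.
    have := @run_bound R (fun k => X k w) (fun k => Y k w)
      (fun k => eps X Y k w) alpha `|Uproc X Y m w| m N a0 (normr_ge0 _) yt XE.
    have Hs : forall n, (n < N)%N -> Y (m + n.+1)%N w <=
        (1 + alpha (m + n.+1)%N) * X (m + n)%N w.
      move=> n nN; have xn := pos n (ltnW nN).
      have hne : X (m + n.+1)%N.-1 w != 0 by rewrite Hk // gt_eqF.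
      have /andP [_ h] := Hw (m + n.+1)%N ltac:(lia) hne.
      by rewrite Hk // ler_pdivrMr // in h.
    move=> /(_ Hs N (leqnn N)) /=.
    by move=> h; rewrite gtr0_norm ?pos //; exact: h.
  - have zero := prop (fun x => x = 0)
      (fun n nN => let: And3 _ _ h := Dc n nN in h) hm.
    rewrite zero // normr0; apply: mulr_ge0; first exact: le_trans L1.
    by apply: addr_ge0.
have HL : (L%:E <= lambda_max alpha)%E.
  apply: ereal_sup_ubound; exists N.+1, (m + N)%N; split => //; first lia.
  by rewrite /lambda subSS addnK shift_prod.
have HS : (S%:E <= Mabs X Y m (Tj X j.+1 w - 1) w)%E.
  rewrite /Mabs; apply: esum_ge; exists [set` index_iota m (m + N).+1].
    split; first exact: finite_seq.
    move=> k /=; rewrite mem_index_iota => /andP [mk kN]; split => //.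
    apply: HT; lia.
  rewrite -fsbig_seq; last by rewrite /index_iota iota_uniq.
  by rewrite sumEFin shift_sum.
apply: (@le_trans _ _ (L%:E * ((`|Uproc X Y m w|)%:E + S%:E))%E).
  by rewrite -EFinD -EFinM lee_fin.
rewrite addeC; apply: lee_pmul => //.
- by rewrite lee_fin; apply: le_trans L1.
- by apply: adde_ge0; rewrite lee_fin.
- by apply: leeD.
Qed.
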